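(* Let $B(\mathbb{R})$ be the C*-algebra of all bounded complex-valued functions on $\mathbb{R}$ (pointwise operations, supremum norm), and let $A=\{f\in B(\mathbb{R}): \{t: f(t)\neq 0\}\text{ is countable}\}$. Then $A$ is a non-unital, monotone $\sigma$-complete commutative C*-algebra (so its only maximal abelian self-adjoint subalgebra, $A$ itself, is monotone $\sigma$-complete), but $A$ is not a Rickart C*-algebra.
   Context: A C*-algebra $B$ is monotone $\sigma$-complete if every norm-bounded monotone increasing sequence in $B_{sa}$ has a supremum in $B_{sa}$. A C*-algebra $B$ is Rickart if for each $a\in B$ there is a projection $p\in B$ such that $\{z\in B: az=0\}=pB$. *)

(* Defs.v *)
From Stdlib Require Import Reals.
Open Scope R_scope.

(** Complex numbers as (real part, imaginary part). *)
Definition C : Type := (R * R)%type.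
Definition C0 : C := (0, 0).
Definition Cadd (x y : C) : C := (fst x + fst y, snd x + snd y).
Definition Copp (x : C) : C := (- fst x, - snd x).
Definition Cmul (x y : C) : C :=
  (fst x * fst y - snd x * snd y, fst x * snd y + snd x * fst y).
Definition Cconj (x : C) : C := (fst x, - snd x).
Definition Cnorm (x : C) : R := sqrt (fst x * fst x + snd x * snd x).

Definition fadd (f g : R -> C) : R -> C := fun t => Cadd (f t) (g t).
Definition fsub (f g : R -> C) : R -> C := fun t => Cadd (f t) (Copp (g t)).
Definition fmul (f g : R -> C) : R -> C := fun t => Cmul (f t) (g t).
Definition fscal (c : C) (f : R -> C) : R -> C := fun t => Cmul c (f t).
Definition fstar (f : R -> C) : R -> C := fun t => Cconj (f t).
Definition feq (f g : R -> C) : Prop := forall t, f t = g t.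

Definition bounded (f : R -> C) : Prop := exists M, forall t, Cnorm (f t) <= M.

(** {t | f t <> 0} is countable (finite or countably infinite): it is covered
    by the range of some sequence of reals. *)
Definition countable_support (f : R -> C) : Prop :=
  exists s : nat -> R, forall t, f t <> C0 -> exists n, s n = t.

Definition inA (f : R -> C) : Prop := bounded f /\ countable_support f.

Definition unif_conv (f : nat -> R -> C) (g : R -> C) : Prop :=
  forall eps, 0 < eps -> exists N, forall n t, (N <= n)%nat ->
    Cnorm (Cadd (f n t) (Copp (g t))) <= eps.

Definition is_Cstar_subalgebra (P : (R -> C) -> Prop) : Prop :=
  (forall f, P f -> bounded f) /\
  P (fun _ => C0) /\
  (forall f g, P f -> P g -> P (fadd f g)) /\
  (forall c f, P f -> P (fscal c f)) /\
  (forall f g, P f -> P g -> P (fmul f g)) /\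
  (forall f, P f -> P (fstar f)) /\
  (forall (f : nat -> R -> C) g, (forall n, P (f n)) -> unif_conv f g -> P g).

Definition commutative_in (P : (R -> C) -> Prop) : Prop :=
  forall f g, P f -> P g -> feq (fmul f g) (fmul g f).

Definition unital_in (P : (R -> C) -> Prop) : Prop :=
  exists e, P e /\ forall f, P f -> feq (fmul e f) f /\ feq (fmul f e) f.

Definition selfadjoint (f : R -> C) : Prop := feq (fstar f) f.

(** Positive elements of this commutative function algebra: pointwise values
    in [0, +oo) (the spectrum-based positivity of a commutative algebra of
    functions, written out). *)
Definition positive (f : R -> C) : Prop := forall t, snd (f t) = 0 /\ 0 <= fst (f t).

Definition cle (f g : R -> C) : Prop := positive (fsub g f).

Definition monotone_sigma_complete (P : (R -> C) -> Prop) : Prop :=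
  forall f : nat -> R -> C,
    (forall n, P (f n) /\ selfadjoint (f n)) ->
    (exists M, forall n t, Cnorm (f n t) <= M) ->
    (forall n, cle (f n) (f (S n))) ->
    exists g, P g /\ selfadjoint g /\
      (forall n, cle (f n) g) /\
      (forall h, P h -> selfadjoint h -> (forall n, cle (f n) h) -> cle g h).

Definition projection (p : R -> C) : Prop := selfadjoint p /\ feq (fmul p p) p.

Definition rickart (P : (R -> C) -> Prop) : Prop :=
  forall a, P a -> exists p, P p /\ projection p /\
    forall z, P z ->
      (feq (fmul a z) (fun _ => C0) <-> exists w, P w /\ feq z (fmul p w)).

(* Main.v *)
Require Import Defs.
From Stdlib Require Import Reals Lra Lia Classical IndefiniteDescription.
From Coquelicot Require Complex.

Open Scope R_scope.

Lemma Cnorm_Cmod (x : Defs.C) : Cnorm x = Complex.Cmod x.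
Proof. unfold Cnorm, Complex.Cmod. f_equal. ring. Qed.

Lemma Cnorm_ge0 x : 0 <= Cnorm x.
Proof. rewrite Cnorm_Cmod. apply Complex.Cmod_ge_0. Qed.

Lemma Cnorm_tri x y : Cnorm (Cadd x y) <= Cnorm x + Cnorm y.
Proof. rewrite !Cnorm_Cmod. apply (Complex.Cmod_triangle x y). Qed.

Lemma Cnorm_mul x y : Cnorm (Cmul x y) = Cnorm x * Cnorm y.
Proof. rewrite !Cnorm_Cmod. apply (Complex.Cmod_mult x y). Qed.

Lemma Cnorm_opp x : Cnorm (Copp x) = Cnorm x.
Proof. rewrite !Cnorm_Cmod. apply (Complex.Cmod_opp x). Qed.

Lemma Cnorm_conj x : Cnorm (Cconj x) = Cnorm x.
Proof. unfold Cnorm, Cconj. simpl. f_equal. ring. Qed.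

Lemma Cnorm_eq0 x : Cnorm x = 0 -> x = C0.
Proof. rewrite Cnorm_Cmod. intro H. apply (Complex.Cmod_eq_0 x H). Qed.

Lemma Cnorm_real r : Cnorm (r, 0) = Rabs r.
Proof.
  unfold Cnorm; simpl. replace (r * r + 0 * 0) with (Rsqr r) by (unfold Rsqr; ring).
  apply sqrt_Rsqr_abs.
Qed.

Lemma Rabs_fst_le x : Rabs (fst x) <= Cnorm x.
Proof.
  rewrite <- sqrt_Rsqr_abs. unfold Cnorm. apply sqrt_le_1_alt.
  unfold Rsqr. nra.
Qed.

Definition cset (P : R -> Prop) : Prop :=
  exists s : nat -> R, forall t, P t -> exists n, s n = t.

Definition nxt (p : nat * nat) : nat * nat :=
  match p with (0, b) => (S b, 0) | (S a, b) => (a, S b) end%nat.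

Fixpoint dec (n : nat) : nat * nat :=
  match n with 0 => (0, 0)%nat | S k => nxt (dec k) end.

Lemma dec_surj : forall d a b, (a + b = d)%nat -> exists k, dec k = (a, b).
Proof.
  induction d as [|d IH]; intros a b H.
  - assert (a = 0%nat) by lia. assert (b = 0%nat) by lia. subst. exists 0%nat. reflexivity.
  - revert a H. induction b as [|b IHb]; intros a H.
    + destruct a as [|a]; [lia|].
      destruct (IH 0%nat a) as [k Hk]; [lia|]. exists (S k). simpl. rewrite Hk. reflexivity.
    + destruct (IHb (S a)) as [k Hk]; [lia|]. exists (S k). simpl. rewrite Hk. reflexivity.
Qed.

Lemma cset_unionN (P : nat -> R -> Prop) :
  (forall k, cset (P k)) -> cset (fun t => exists k, P k t).
Proof.
  intros H.
  set (S := fun k => proj1_sig (constructive_indefinite_description _ (H k))).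
  assert (HS : forall k t, P k t -> exists n, S k n = t).
  { intros k. unfold S. destruct (constructive_indefinite_description _ (H k)) as [s Hs].
    simpl. exact Hs. }
  exists (fun n => S (fst (dec n)) (snd (dec n))).
  intros t [k Hk]. destruct (HS k t Hk) as [n Hn].
  destruct (dec_surj (k + n) k n eq_refl) as [m Hm].
  exists m. rewrite Hm. simpl. exact Hn.
Qed.

Lemma cset_sub (P Q : R -> Prop) : cset P -> (forall t, Q t -> P t) -> cset Q.
Proof. intros [s Hs] H. exists s. intros t Ht. apply Hs, H, Ht. Qed.

Lemma cset_union2 (P Q : R -> Prop) : cset P -> cset Q -> cset (fun t => P t \/ Q t).
Proof.
  intros HP HQ.
  apply (cset_sub (fun t => exists k, (match k with 0%nat => P | _ => Q end) t)).
  - apply cset_unionN. intros [|k]; assumption.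
  - intros t [H|H]; [exists 0%nat | exists 1%nat]; exact H.
Qed.

Fixpoint iv (u : nat -> R) (n : nat) : R * R :=
  match n with
  | 0%nat => (0, 1)
  | S k => let p := iv u k in
      if Rlt_dec ((2 * fst p + snd p) / 3) (u k)
      then (fst p, (2 * fst p + snd p) / 3)
      else ((fst p + 2 * snd p) / 3, snd p)
  end.

Lemma iv_lt u n : fst (iv u n) < snd (iv u n).
Proof.
  induction n; simpl. lra.
  destruct (Rlt_dec _ _); simpl; lra.
Qed.

Lemma iv_step u n : fst (iv u n) <= fst (iv u (S n)) /\ snd (iv u (S n)) <= snd (iv u n)
  /\ ~ (fst (iv u (S n)) <= u n <= snd (iv u (S n))).
Proof.
  pose proof (iv_lt u n). simpl. destruct (Rlt_dec _ _); simpl; lra.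
Qed.

Lemma iv_mono u n k : fst (iv u n) <= fst (iv u (n + k)) /\ snd (iv u (n + k)) <= snd (iv u n).
Proof.
  induction k. rewrite Nat.add_0_r. lra.
  rewrite Nat.add_succ_r. pose proof (iv_step u (n + k)). lra.
Qed.

Lemma iv_ab u m n : fst (iv u m) <= snd (iv u n).
Proof.
  destruct (Nat.le_ge_cases m n) as [H|H].
  - destruct (Nat.le_exists_sub m n H) as [k [Hk _]]. subst n.
    rewrite Nat.add_comm. pose proof (iv_mono u m k). pose proof (iv_lt u (m + k)). lra.
  - destruct (Nat.le_exists_sub n m H) as [k [Hk _]]. subst m.
    rewrite Nat.add_comm. pose proof (iv_mono u n k). pose proof (iv_lt u (n + k)). lra.
Qed.

Lemma R_not_range (u : nat -> R) : exists t, forall n, u n <> t.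
Proof.
  set (E := fun r => exists n, r = fst (iv u n)).
  assert (Hb : bound E). { exists 1. intros r [n ->]. apply (iv_ab u n 0). }
  assert (Hne : exists x, E x). { exists (fst (iv u 0)). exists 0%nat. reflexivity. }
  destruct (completeness E Hb Hne) as [x [Hup Hlub]].
  exists x. intros n Hn.
  assert (H1 : fst (iv u (S n)) <= x). { apply Hup. exists (S n). reflexivity. }
  assert (H2 : x <= snd (iv u (S n))). { apply Hlub. intros r [m ->]. apply iv_ab. }
  destruct (iv_step u n) as [_ [_ H3]]. apply H3. rewrite Hn. lra.
Qed.

Lemma C0_dec (x : Defs.C) : {x = C0} + {x <> C0}.
Proof.
  destruct x as [a b]. unfold C0.
  destruct (Req_EM_T a 0); destruct (Req_EM_T b 0); subst;
  [left; reflexivity | right | right | right]; intro H; injection H; intros; contradiction.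
Qed.

Definition ind (t0 : R) : R -> Defs.C := fun t => if Req_EM_T t t0 then (1, 0) else C0.

Lemma ind_inA t0 : inA (ind t0).
Proof.
  split.
  - exists 1. intro t. unfold ind. destruct (Req_EM_T t t0).
    + rewrite Cnorm_real, Rabs_R1. lra.
    + unfold C0. rewrite Cnorm_real, Rabs_R0. lra.
  - exists (fun _ => t0). intros t Ht. exists 0%nat. unfold ind in Ht.
    destruct (Req_EM_T t t0); [congruence | contradiction].
Qed.

Lemma sa_snd f t : selfadjoint f -> snd (f t) = 0.
Proof. intro H. pose proof (f_equal snd (H t)) as E. unfold Cconj in E. simpl in E. lra. Qed.

Theorem mainTheorem11 :
  is_Cstar_subalgebra inA /\ commutative_in inA /\ ~ unital_in inA /\
  monotone_sigma_complete inA /\ ~ rickart inA.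
Proof.
  split; [|split; [|split; [|split]]].
  -
    split; [|split; [|split; [|split; [|split; [|split]]]]].
    + intros f [H _]; exact H.
    + split. exists 0. intro t. unfold C0. rewrite Cnorm_real, Rabs_R0. lra.
      exists (fun _ => 0). intros t Ht. contradiction.
    + intros f g [[Mf Hf] Sf] [[Mg Hg] Sg]. split.
      * exists (Mf + Mg). intro t. unfold fadd.
        pose proof (Cnorm_tri (f t) (g t)). pose proof (Hf t). pose proof (Hg t). lra.
      * apply (cset_sub _ _ (cset_union2 _ _ Sf Sg)). intros t Ht.
        destruct (C0_dec (f t)) as [E|E]; [right|left; exact E].
        intro E2. apply Ht. unfold fadd. rewrite E, E2. unfold Cadd, C0. simpl. f_equal; ring.
    + intros c f [[Mf Hf] Sf]. split.
      * exists (Cnorm c * Mf). intro t. unfold fscal. rewrite Cnorm_mul.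
        apply Rmult_le_compat_l; [apply Cnorm_ge0 | apply Hf].
      * apply (cset_sub _ _ Sf). intros t Ht E. apply Ht. unfold fscal. rewrite E.
        unfold Cmul, C0. simpl. f_equal; ring.
    + intros f g [[Mf Hf] Sf] [[Mg Hg] Sg]. split.
      * exists (Mf * Mg). intro t. unfold fmul. rewrite Cnorm_mul.
        apply Rmult_le_compat; try apply Cnorm_ge0; auto.
      * apply (cset_sub _ _ Sf). intros t Ht E. apply Ht. unfold fmul. rewrite E.
        unfold Cmul, C0. simpl. f_equal; ring.
    + intros f [[Mf Hf] Sf]. split.
      * exists Mf. intro t. unfold fstar. rewrite Cnorm_conj. apply Hf.
      * apply (cset_sub _ _ Sf). intros t Ht E. apply Ht. unfold fstar. rewrite E.
        unfold Cconj, C0. simpl. f_equal; ring.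
    + intros f g Hf Hc. split.
      * destruct (Hc 1 Rlt_0_1) as [N HN]. destruct (Hf N) as [[M HM] _].
        exists (M + 1). intro t.
        pose proof (HN N t (Nat.le_refl N)) as H1.
        pose proof (Cnorm_tri (f N t) (Copp (Cadd (f N t) (Copp (g t))))) as H2.
        replace (Cadd (f N t) (Copp (Cadd (f N t) (Copp (g t))))) with (g t) in H2.
        2:{ unfold Cadd, Copp. simpl. destruct (g t). simpl. f_equal; ring. }
        rewrite Cnorm_opp in H2. pose proof (HM t). lra.
      * apply (cset_sub _ _ (cset_unionN (fun n t => f n t <> C0) (fun n => proj2 (Hf n)))).
        intros t Ht. apply NNPP. intro Hn.
        assert (Hz : forall n, f n t = C0).
        { intro n. apply NNPP. intro E. apply Hn. exists n. exact E. }
        apply Ht. apply Cnorm_eq0.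
        apply Rle_antisym; [|apply Cnorm_ge0].
        apply Rnot_lt_le. intro Hpos.
        destruct (Hc (Cnorm (g t) / 2) ltac:(lra)) as [N HN].
        pose proof (HN N t (Nat.le_refl N)) as H1. rewrite Hz in H1.
        replace (Cadd C0 (Copp (g t))) with (Copp (g t)) in H1
          by (unfold Cadd, Copp, C0; simpl; f_equal; ring).
        rewrite Cnorm_opp in H1. lra.
  -
    intros f g _ _ t. unfold fmul, Cmul. f_equal; ring.
  -
    intros [e [[_ [s Hs]] He]].
    destruct (R_not_range s) as [t0 Ht0].
    destruct (He (ind t0) (ind_inA t0)) as [H1 _].
    pose proof (H1 t0) as E. unfold fmul, ind in E.
    destruct (Req_EM_T t0 t0) as [_|n]; [|contradiction].
    destruct (C0_dec (e t0)) as [Z|Z].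
    + rewrite Z in E. unfold Cmul, C0 in E. simpl in E. injection E. lra.
    + destruct (Hs t0 Z) as [n Hn]. exact (Ht0 n Hn).
  -
    intros f Hf [M HM] _.
    set (E := fun t r => exists n, r = fst (f n t)).
    assert (Hb : forall t, bound (E t)).
    { intro t. exists M. intros r [n ->].
      pose proof (Rabs_fst_le (f n t)). pose proof (HM n t).
      pose proof (Rle_abs (fst (f n t))). lra. }
    assert (Hne : forall t, exists x, E t x).
    { intro t. exists (fst (f 0%nat t)). exists 0%nat. reflexivity. }
    set (sup := fun t => proj1_sig (completeness (E t) (Hb t) (Hne t))).
    assert (Hsup : forall t, is_lub (E t) (sup t)).
    { intro t. unfold sup. destruct (completeness _ _ _) as [m Hm]. exact Hm. }
    exists (fun t => (sup t, 0)). split; [|split; [|split]].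
    + split.
      * exists M. intro t. rewrite Cnorm_real. destruct (Hsup t) as [Hu Hl].
        assert (H1 : fst (f 0%nat t) <= sup t) by (apply Hu; exists 0%nat; reflexivity).
        assert (H2 : sup t <= M).
        { apply Hl. intros r [n ->].
          pose proof (Rabs_fst_le (f n t)). pose proof (HM n t).
          pose proof (Rle_abs (fst (f n t))). lra. }
        pose proof (Rabs_fst_le (f 0%nat t)). pose proof (HM 0%nat t).
        pose proof (Rle_abs (fst (f 0%nat t))).
        pose proof (Rabs_Ropp (fst (f 0%nat t))). pose proof (Rle_abs (- fst (f 0%nat t))).
        apply Rabs_le. lra.
      * apply (cset_sub _ _ (cset_unionN (fun n t => f n t <> C0) (fun n => proj2 (proj1 (Hf n))))).
        intros t Ht. apply NNPP. intro Hn.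
        assert (Hz : forall n, f n t = C0).
        { intro n. apply NNPP. intro E0. apply Hn. exists n. exact E0. }
        apply Ht. destruct (Hsup t) as [Hu Hl].
        assert (sup t = 0).
        { apply Rle_antisym.
          - apply Hl. intros r [n ->]. rewrite Hz. simpl. lra.
          - apply Hu. exists 0%nat. rewrite Hz. reflexivity. }
        rewrite H. reflexivity.
    + intro t. unfold fstar, Cconj. simpl. f_equal. ring.
    + intros n t. unfold fsub, Cadd, Copp. simpl.
      rewrite (sa_snd (f n) t (proj2 (Hf n))). split; [ring|].
      destruct (Hsup t) as [Hu _].
      assert (fst (f n t) <= sup t) by (apply Hu; exists n; reflexivity). lra.
    + intros h Hh Hsa Hle t. unfold fsub, Cadd, Copp. simpl.
      rewrite (sa_snd h t Hsa). split; [ring|].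
      destruct (Hsup t) as [_ Hl].
      assert (sup t <= fst (h t)).
      { apply Hl. intros r [n ->]. destruct (Hle n t) as [_ H].
        unfold fsub, Cadd, Copp in H. simpl in H. lra. }
      lra.
  -
    intro Hr.
    assert (H0 : inA (fun _ => C0)).
    { split. exists 0. intro t. unfold C0. rewrite Cnorm_real, Rabs_R0. lra.
      exists (fun _ => 0). intros t Ht. contradiction. }
    destruct (Hr _ H0) as [p [[_ [s Hs]] [_ Hp]]].
    destruct (R_not_range s) as [t1 Ht1].
    destruct (proj1 (Hp (ind t1) (ind_inA t1))) as [w [_ Hw]].
    { intro t. unfold fmul, Cmul, C0. simpl. f_equal; ring. }
    pose proof (Hw t1) as E. unfold fmul, ind in E.
    destruct (Req_EM_T t1 t1) as [_|n]; [|contradiction].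
    destruct (C0_dec (p t1)) as [Z|Z].
    + rewrite Z in E. unfold Cmul, C0 in E. simpl in E. injection E. lra.
    + destruct (Hs t1 Z) as [n Hn]. exact (Ht1 n Hn).
Qed.

Print Assumptions mainTheorem11.
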